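(* In the situation below, the image $\bar\chi\in B$ of $\chi$ under $A\to B$ equals $(\mathbf a_{B^*})^{-1}$, the inverse of the distinguished group-like element of $B^*$.
   Context: $\Bbbk$ a field of characteristic $\ne 2$, $\mathbb G$ an algebraic supergroup, $\mathbb N$ a finite normal super-subgroup, $A=\mathcal O(\mathbb G)$, $B=\mathcal O(\mathbb N)$ with quotient map $a\mapsto\bar a$. Normality gives a left $A$-coaction on $B$, $\bar a\mapsto\sum(-1)^{|a_{(2)}||a_{(3)}|}a_{(1)}S_A(a_{(3)})\otimes\bar a_{(2)}$, hence a dual right $A$-supercomodule structure on $B^*$. Fix a nonzero homogeneous left integral $\phi$ in $B^*$ ($h\phi=\varepsilon(h)\phi$ for all $h\in B^*$; unique up to scalar). There is a unique group-like $\chi\in A$ with $\phi\mapsto\phi\otimes\chi$ under the coaction. The distinguished group-like element $\mathbf a_{B^*}\in B\cong B^{**}$ is the unique group-like element with $\phi*f=\langle f,\mathbf a_{B^*}\rangle\phi$ for all $f\in B^*$. *)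

(* Defs.v *)
(* Hopf superalgebras encoded concretely (no tensor product
   library is available): a tensor in A (x) A is represented by a finite list
   of pure tensors, and two such lists are identified when they agree under
   all pairs of linear functionals (A (x) B -> (A^* (x) B^* )^* is injective
   over a field, so this is exactly equality in A (x) A). *)
From HB Require Import structures.
From mathcomp Require Import all_boot all_order all_algebra all_field.
Set Implicit Arguments. Unset Strict Implicit. Unset Printing Implicit Defensive.
Import GRing.Theory.
Local Open Scope ring_scope.

Section SuperHopf.
Variable K : fieldType.

Definition lin_fun (V : lmodType K) (f : V -> K) : Prop :=
  forall (c : K) (x y : V), f (c *: x + y) = c * f x + f y.

Variable A : algType K.

Definition teq (s t : seq (A * A)) : Prop :=
  forall f g : A -> K, lin_fun f -> lin_fun g ->
    \sum_(p <- s) f p.1 * g p.2 = \sum_(p <- t) f p.1 * g p.2.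

Definition teq3 (s t : seq (A * A * A)) : Prop :=
  forall f g h : A -> K, lin_fun f -> lin_fun g -> lin_fun h ->
    \sum_(p <- s) f p.1.1 * g p.1.2 * h p.2 =
    \sum_(p <- t) f p.1.1 * g p.1.2 * h p.2.

(* A Z/2-graded (super) Hopf algebra structure on A, given by the projection
   par0 onto the even part (the odd part of x is x - par0 x), the coproduct,
   the counit and the antipode. *)
Record superHopf := SuperHopf {
  par0 : A -> A;
  cop : A -> seq (A * A);
  cou : A -> K;
  anti : A -> A;
  (* grading: A = A_0 (+) A_1 with A_i A_j <= A_{i+j} *)
  par0_lin : forall (c : K) x y, par0 (c *: x + y) = c *: par0 x + par0 y;
  par0_idem : forall x, par0 (par0 x) = par0 x;
  par0_1 : par0 1 = 1;
  par0_ee : forall x y, par0 (par0 x * par0 y) = par0 x * par0 y;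
  par0_oo : forall x y, par0 ((x - par0 x) * (y - par0 y)) = (x - par0 x) * (y - par0 y);
  par0_eo : forall x y, par0 (par0 x * (y - par0 y)) = 0;
  par0_oe : forall x y, par0 ((x - par0 x) * par0 y) = 0;
  cop_lin : forall (c : K) x y,
    teq (cop (c *: x + y)) ([seq (c *: p.1, p.2) | p <- cop x] ++ cop y);
  cop_even : forall x, teq (cop (par0 x))
    ([seq (par0 p.1, par0 p.2) | p <- cop x] ++
     [seq (p.1 - par0 p.1, p.2 - par0 p.2) | p <- cop x]);
  cop_coassoc : forall x,
    teq3 (flatten [seq [seq (u.1, u.2, p.2) | u <- cop p.1] | p <- cop x])
         (flatten [seq [seq (p.1, v.1, v.2) | v <- cop p.2] | p <- cop x]);
  cop_1 : teq (cop 1) [:: (1, 1)];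
  (* (x (x) y)(u (x) v) = (-1)^{|y||u|} xu (x) yv *)
  cop_mul : forall x y, teq (cop (x * y))
    (flatten [seq [:: (p.1 * r.1, par0 p.2 * r.2);
                      (p.1 * par0 r.1, (p.2 - par0 p.2) * r.2);
                      (- (p.1 * (r.1 - par0 r.1)), (p.2 - par0 p.2) * r.2)]
             | p <- cop x, r <- cop y]);
  cou_lin : lin_fun cou;
  cou_even : forall x, cou (x - par0 x) = 0;
  cou_1 : cou 1 = 1;
  cou_mul : forall x y, cou (x * y) = cou x * cou y;
  cou_l : forall x, \sum_(p <- cop x) cou p.1 *: p.2 = x;
  cou_r : forall x, \sum_(p <- cop x) cou p.2 *: p.1 = x;
  anti_lin : forall (c : K) x y, anti (c *: x + y) = c *: anti x + anti y;
  anti_even : forall x, anti (par0 x) = par0 (anti x);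
  anti_l : forall x, \sum_(p <- cop x) anti p.1 * p.2 = cou x *: 1;
  anti_r : forall x, \sum_(p <- cop x) p.1 * anti p.2 = cou x *: 1
}.

Definition par1 (H : superHopf) (x : A) : A := x - par0 H x.

Definition supercomm (H : superHopf) : Prop :=
  (forall x y, par0 H x * y = y * par0 H x) /\
  (forall x y, par1 H x * par1 H y = - (par1 H y * par1 H x)).

Definition fin_gen : Prop :=
  exists s : seq A, forall P : A -> Prop,
    P 1 -> (forall c x y, P x -> P y -> P (c *: x + y)) ->
    (forall x y, P x -> P y -> P (x * y)) ->
    (forall x, x \in s -> P x) -> forall a, P a.

Definition grouplike (H : superHopf) (g : A) : Prop :=
  teq (cop H g) [:: (g, g)] /\ cou H g = 1.

End SuperHopf.

Definition alg_supergroup (K : fieldType) (A : algType K) (H : superHopf A) :=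
  supercomm H /\ fin_gen A.

Section Maps.
Variables (K : fieldType) (A B : algType K) (HA : superHopf A) (HB : superHopf B).

Definition hopf_quot (q : A -> B) : Prop :=
  [/\ (forall (c : K) x y, q (c *: x + y) = c *: q x + q y),
      q 1 = 1 & (forall x y, q (x * y) = q x * q y)] /\
  [/\ (forall x, q (par0 HA x) = par0 HB (q x)),
      (forall x, teq (cop HB (q x)) [seq (q p.1, q p.2) | p <- cop HA x]),
      (forall x, cou HB (q x) = cou HA x)
    & (forall b, exists a, q a = b)].

(* (id (x) f)(ad(a)) where ad(a) = sum (-1)^{|a2||a3|} a1 S(a3) (x) q(a2)
   is the adjoint coaction A -> A (x) B, evaluated against f in B^*. *)
Definition adj (q : A -> B) (f : B -> K) (a : A) : A :=
  \sum_(t <- flatten [seq [seq (u.1, u.2, p.2) | u <- cop HA p.1] | p <- cop HA a])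
    (f (q t.1.2) *: (t.1.1 * anti HA t.2)
     - 2%:R * f (q (par1 HA t.1.2)) *: (t.1.1 * anti HA (par1 HA t.2))).

(* normality of N: the adjoint coaction maps ker q into A (x) ker q,
   i.e. (id (x) q) o ad vanishes on ker q *)
Definition normal_quot (q : A -> B) : Prop :=
  forall a, q a = 0 -> forall f : B -> K, lin_fun f -> adj q f a = 0.

Definition conv (f g : B -> K) (b : B) : K :=
  \sum_(p <- cop HB b) f p.1 * g p.2.

Definition left_integral (phi : B -> K) : Prop :=
  [/\ lin_fun phi, (exists b, phi b != 0),
      (forall b, phi (par1 HB b) = 0) \/ (forall b, phi (par0 HB b) = 0)
    & forall h : B -> K, lin_fun h -> forall b, conv h phi b = h 1 * phi b].

(* the dual right coaction sends phi to phi (x) chi *)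
Definition coacts_by (q : A -> B) (phi : B -> K) (chi : A) : Prop :=
  forall a, phi (q a) *: chi = adj q phi a.

(* distinguished group-like element of B^* (an element of B, identified with the double dual of B) *)
Definition distinguished (phi : B -> K) (g : B) : Prop :=
  grouplike HB g /\
  forall f : B -> K, lin_fun f -> forall b, conv phi f b = f g * phi b.

End Maps.

(* Main.v *)
Require Import Defs.
From mathcomp Require Import all_boot all_order all_algebra all_field.
Set Implicit Arguments. Unset Strict Implicit. Unset Printing Implicit Defensive.
Import GRing.Theory.
Local Open Scope ring_scope.

Section Gen.
Variable K : fieldType.

Definition islin (V W : lmodType K) (f : V -> W) :=
  forall (c : K) x y, f (c *: x + y) = c *: f x + f y.

Section L.
Variables (V W : lmodType K) (f : V -> W) (Hf : islin f).
Lemma lf0 : f 0 = 0.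
Proof. have := Hf 1 0 0; rewrite scaler0 addr0 scale1r.
by move=> /(congr1 (fun z => z - f 0)); rewrite subrr addrK. Qed.
Lemma lfD x y : f (x + y) = f x + f y.
Proof. by have := Hf 1 x y; rewrite !scale1r. Qed.
Lemma lfZ c x : f (c *: x) = c *: f x.
Proof. by have := Hf c x 0; rewrite !addr0 lf0 addr0. Qed.
Lemma lfN x : f (- x) = - f x.
Proof. by rewrite -scaleN1r lfZ scaleN1r. Qed.
Lemma lfB x y : f (x - y) = f x - f y.
Proof. by rewrite lfD lfN. Qed.
Lemma lf_sum (I : Type) (s : seq I) (F : I -> V) :
  f (\sum_(i <- s) F i) = \sum_(i <- s) f (F i).
Proof. elim: s => [|x s IH]; first by rewrite !big_nil lf0.
by rewrite !big_cons lfD IH. Qed.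
End L.

Lemma islin_sub (V W : lmodType K) (f g : V -> W) :
  islin f -> islin g -> islin (fun x => f x - g x).
Proof. by move=> hf hg c x y; rewrite hf hg scalerBr opprD addrACA. Qed.
Lemma islin_scale (V W : lmodType K) (g : V -> W) k :
  islin g -> islin (fun x => k *: g x).
Proof. by move=> hg c x y; rewrite hg scalerDr !scalerA mulrC. Qed.
Lemma islin_id (V : lmodType K) : islin (fun x : V => x).
Proof. by []. Qed.

Lemma linfun_lin (V : lmodType K) (f : V -> K) : lin_fun f -> forall c x y, f (c *: x + y) = c * f x + f y.
Proof. by []. Qed.

Section Fin.
Variable B : falgType K.
Definition cf (i : 'I_(\dim (fullv : {vspace B}))) (x : B) : K :=
  coord (vbasis (fullv : {vspace B})) i x.
Definition bb (i : 'I_(\dim (fullv : {vspace B}))) : B := (vbasis (fullv : {vspace B}))`_i.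

Lemma cf_lin i : lin_fun (cf i).
Proof. by move=> c x y; rewrite /cf linearP. Qed.

Lemma expand (x : B) : x = \sum_i cf i x *: bb i.
Proof. exact: (coord_vbasis (memvf x)). Qed.

Lemma sep (x y : B) : (forall i, cf i x = cf i y) -> x = y.
Proof. by move=> H; rewrite (expand x) (expand y); apply: eq_bigr => i _; rewrite H. Qed.

Lemma expand_lin (V : lmodType K) (G : B -> V) : islin G ->
  forall x, G x = \sum_i cf i x *: G (bb i).
Proof.
move=> HG x; rewrite {1}(expand x) (lf_sum HG); apply: eq_bigr => i _.
by rewrite (lfZ HG).
Qed.

Lemma cf_sum (I : Type) (s : seq I) (F : I -> B) i :
  cf i (\sum_(j <- s) F j) = \sum_(j <- s) cf i (F j).
Proof. by rewrite /cf linear_sum. Qed.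
Lemma cf_Z i c x : cf i (c *: x) = c * cf i x.
Proof. by rewrite /cf linearZ. Qed.

Lemma teq_bil (V : lmodType K) (s t : seq (B * B)) (F : B -> B -> V) :
  teq s t -> (forall y, islin (F^~ y)) -> (forall x, islin (F x)) ->
  \sum_(p <- s) F p.1 p.2 = \sum_(p <- t) F p.1 p.2.
Proof.
move=> H Hl Hr.
have E : forall x y, F x y = \sum_i \sum_j (cf i x * cf j y) *: F (bb i) (bb j).
  move=> x y; rewrite (expand_lin (Hl y)); apply: eq_bigr => i _.
  rewrite (expand_lin (Hr (bb i))) scaler_sumr; apply: eq_bigr => j _.
  by rewrite scalerA.
have E2 : forall u : seq (B * B), \sum_(p <- u) F p.1 p.2 =
  \sum_i \sum_j (\sum_(p <- u) cf i p.1 * cf j p.2) *: F (bb i) (bb j).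
  move=> u; under eq_bigr do rewrite E.
  rewrite exchange_big /=; apply: eq_bigr => i _.
  rewrite exchange_big /=; apply: eq_bigr => j _.
  by rewrite scaler_suml.
rewrite !E2; apply: eq_bigr => i _; apply: eq_bigr => j _.
by rewrite (H _ _ (@cf_lin i) (@cf_lin j)).
Qed.
End Fin.

Section MapT.
Variables (A B : algType K).
Lemma teq_map (f1 f2 : A -> B) s t : islin f1 -> islin f2 -> teq s t ->
  teq [seq (f1 p.1, f2 p.2) | p <- s] [seq (f1 p.1, f2 p.2) | p <- t].
Proof.
move=> H1 H2 H f g hf hg; rewrite !big_map /=.
apply: (H (fun x => f (f1 x)) (fun x => g (f2 x))).
  by move=> c x y; rewrite H1 hf.
by move=> c x y; rewrite H2 hg.
Qed.
End MapT.

End Gen.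



Lemma teq3_prod (K : fieldType) (A : algType K) (B : falgType K) s t (f1 f2 f3 : A -> B) :
  teq3 s t -> islin f1 -> islin f2 -> islin f3 ->
  \sum_(p <- s) f1 p.1.1 * f2 p.1.2 * f3 p.2 = \sum_(p <- t) f1 p.1.1 * f2 p.1.2 * f3 p.2.
Proof.
move=> H h1 h2 h3.
have E : forall x y z, f1 x * f2 y * f3 z = \sum_i \sum_j \sum_k
   (cf i (f1 x) * cf j (f2 y) * cf k (f3 z)) *: (bb i * bb j * bb k).
  move=> x y z.
  have G1 : forall w : B, islin (fun v : B => v * w).
    by move=> w c u v /=; rewrite mulrDl -scalerAl.
  have G2 : forall w w' : B, islin (fun v : B => w * (v * w')).
    by move=> w w' c u v /=; rewrite mulrDl mulrDr -scalerAl -scalerAr.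
  have G3 : forall w : B, islin (fun v : B => w * v).
    by move=> w c u v /=; rewrite mulrDr -scalerAr.
  rewrite -mulrA (expand_lin (G1 _) (f1 x)); apply: eq_bigr => i _.
  rewrite (expand_lin (G2 _ _) (f2 y)) scaler_sumr; apply: eq_bigr => j _.
  rewrite mulrA (expand_lin (G3 _) (f3 z)) !scaler_sumr; apply: eq_bigr => k _.
  by rewrite !scalerA.
have E2 : forall u : seq (A * A * A), \sum_(p <- u) f1 p.1.1 * f2 p.1.2 * f3 p.2 =
  \sum_i \sum_j \sum_k (\sum_(p <- u) cf i (f1 p.1.1) * cf j (f2 p.1.2) * cf k (f3 p.2))
     *: (bb i * bb j * bb k).
  move=> u; under eq_bigr do rewrite E.
  rewrite exchange_big /=; apply: eq_bigr => i _.
  rewrite exchange_big /=; apply: eq_bigr => j _.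
  rewrite exchange_big /=; apply: eq_bigr => k _.
  by rewrite scaler_suml.
have L : forall (f : A -> B) i, islin f -> lin_fun (fun x => cf i (f x)).
  by move=> f i hf c x y; rewrite hf cf_lin.
rewrite !E2; apply: eq_bigr => i _; apply: eq_bigr => j _; apply: eq_bigr => k _.
by rewrite (H _ _ _ (L _ i h1) (L _ j h2) (L _ k h3)).
Qed.



Section Main.
Variables (K : fieldType) (A : algType K) (B : falgType K)
  (HA : superHopf A) (HB : superHopf B) (q : A -> B).
Hypotheses (qlin : islin q) (q1 : q 1 = 1) (qM : forall x y, q (x * y) = q x * q y)
  (qcop : forall x, teq (cop HB (q x)) [seq (q p.1, q p.2) | p <- cop HA x])
  (qcou : forall x, cou HB (q x) = cou HA x).

Let SAlin : islin (anti HA) := @anti_lin _ _ HA.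
Let SBlin : islin (anti HB) := @anti_lin _ _ HB.

Lemma qcop_sum (V : lmodType K) (F : B -> B -> V) x :
  (forall y, islin (F^~ y)) -> (forall x, islin (F x)) ->
  \sum_(p <- cop HA x) F (q p.1) (q p.2) = \sum_(p <- cop HB (q x)) F p.1 p.2.
Proof.
move=> Hl Hr; rewrite (teq_bil (qcop x) Hl Hr) big_map //.
Qed.

Lemma qS a : q (anti HA a) = anti HB (q a).
Proof.
have C := cop_coassoc HA a.
have l1 : islin (fun x => anti HB (q x)) by move=> c x y; rewrite qlin SBlin.
have l3 : islin (fun x => q (anti HA x)) by move=> c x y; rewrite SAlin qlin.
have P := teq3_prod C l1 qlin l3.
rewrite !big_flatten !big_map /= in P.
transitivity (\sum_(p <- cop HA a) cou HA p.1 *: q (anti HA p.2)).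
  rewrite -{1}(cou_l HA a) (lf_sum SAlin) (lf_sum qlin); apply: eq_bigr => p _.
  by rewrite (lfZ SAlin) (lfZ qlin).
transitivity (\sum_(p <- cop HA a) cou HA p.2 *: anti HB (q p.1)); last first.
  rewrite -[in RHS](cou_r HA a) (lf_sum qlin) (lf_sum SBlin); apply: eq_bigr => p _.
  by rewrite (lfZ qlin) (lfZ SBlin).
transitivity (\sum_(p <- cop HA a) \sum_(u <- cop HA p.1)
     anti HB (q u.1) * q u.2 * q (anti HA p.2)).
  apply: eq_bigr => p _; rewrite -big_distrl /=.
  rewrite (@qcop_sum _ (fun x y => anti HB x * y)).
  - by rewrite anti_l qcou -scalerAl mul1r.
  - by move=> y c u v /=; rewrite SBlin mulrDl -scalerAl.
  - by move=> x c u v /=; rewrite mulrDr -scalerAr.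
have P2 : forall (l : seq (A * A)) (h : A * A -> A * A * A) (F : A * A * A -> B),
  \sum_(i <- [seq h u | u <- l]) F i = \sum_(u <- l) F (h u) by move=> *; rewrite big_map.
rewrite (eq_bigr _ (fun j _ => P2 _ _ _)) [in RHS](eq_bigr _ (fun j _ => P2 _ _ _)) /= in P.
rewrite P; apply: eq_bigr => p _.
rewrite (eq_bigr (fun v => anti HB (q p.1) * (q v.1 * q (anti HA v.2)))); last by move=> *; rewrite mulrA.
rewrite -big_distrr /=.
rewrite (eq_bigr (fun v => q (v.1 * anti HA v.2))); last by move=> *; rewrite qM.
by rewrite -(lf_sum qlin) anti_r (lfZ qlin) q1 -scalerAr mulr1.
Qed.

Variables (phi : B -> K) (aB : B).
Hypothesis (philin : lin_fun phi).
Hypothesis (qpar : forall x, q (par0 HA x) = par0 HB (q x)).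

Lemma phiZ c x : phi (c *: x) = c * phi x.
Proof. by have := philin c x 0; rewrite !addr0 (_ : phi 0 = 0) ?addr0 //;
  have := philin 1 0 0; rewrite scaler0 addr0 mul1r => /(congr1 (fun z => z - phi 0));
  rewrite subrr addrK. Qed.

Lemma phiB x y : phi (x - y) = phi x - phi y.
Proof. have := philin (-1) y x; rewrite scaleN1r mulN1r addrC => ->; by rewrite addrC. Qed.

Lemma LIv : (forall h : B -> K, lin_fun h -> forall b, conv HB h phi b = h 1 * phi b) ->
  forall b, \sum_(p <- cop HB b) phi p.2 *: p.1 = phi b *: 1.
Proof.
move=> H b; apply: sep => i; rewrite cf_sum cf_Z mulrC -H; last exact: cf_lin.
by rewrite /conv; apply: eq_bigr => p _; rewrite cf_Z mulrC.
Qed.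

Lemma DIv : (forall f : B -> K, lin_fun f -> forall b, conv HB phi f b = f aB * phi b) ->
  forall b, \sum_(p <- cop HB b) phi p.1 *: p.2 = phi b *: aB.
Proof.
move=> H b; apply: sep => i; rewrite cf_sum cf_Z mulrC -H; last exact: cf_lin.
by rewrite /conv; apply: eq_bigr => p _; rewrite cf_Z.
Qed.

Lemma par0lin (C : algType K) (H : superHopf C) : islin (par0 H).
Proof. exact: par0_lin. Qed.

Lemma adj_comp (k : K) :
  (forall b, \sum_(p <- cop HB b) phi p.2 *: p.1 = phi b *: 1) ->
  (forall b, \sum_(p <- cop HB b) phi p.1 *: p.2 = phi b *: aB) ->
  (forall x, 2%:R * phi (q (par1 HA x)) = k * phi (q x)) ->
  forall a, q (adj HA q phi a) = phi (q a) *: anti HB (aB - k *: par1 HB aB).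
Proof.
move=> LI DI Hk a.
pose tau (x : A) := x - k *: par1 HA x.
have p1lin : islin (par1 HA) := islin_sub (@islin_id _ _) (par0lin HA).
have taulin : islin tau := islin_sub (@islin_id _ _) (islin_scale k p1lin).
transitivity (\sum_(t <- flatten [seq [seq (u.1, u.2, p.2) | u <- cop HA p.1] | p <- cop HA a])
   phi (q t.1.2) *: (q t.1.1 * q (anti HA (tau t.2)))).
  rewrite /adj (lf_sum qlin); apply: eq_bigr => t _.
  rewrite (lfB qlin) !(lfZ qlin) !qM Hk /tau (lfB SAlin t.2 (k *: par1 HA t.2)) (lfZ SAlin k) (lfB qlin (anti HA t.2)) (lfZ qlin k).
  by rewrite mulrBr scalerBr -scalerAr scalerA (mulrC k).
rewrite big_flatten /= big_map.
transitivity (\sum_(p <- cop HA a) phi (q p.1) *: q (anti HA (tau p.2))).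
  apply: eq_bigr => p _; rewrite big_map /=.
  rewrite (eq_bigr (fun u => (phi (q u.2) *: q u.1) * q (anti HA (tau p.2)))); last first.
    by move=> u _; rewrite scalerAl.
  rewrite -big_distrl /= (@qcop_sum _ (fun x y => phi y *: x)).
  - by rewrite LI -scalerAl mul1r.
  - by move=> y c u v /=; rewrite scalerDr !scalerA mulrC.
  - by move=> x c u v /=; rewrite philin scalerDl scalerA.
have E1 : \sum_(p <- cop HA a) phi (q p.1) *: q (anti HA (tau p.2)) =
    q (anti HA (tau (\sum_(p <- cop HA a) phi (q p.1) *: p.2))).
  rewrite (lf_sum taulin) (lf_sum SAlin) (lf_sum qlin); apply: eq_bigr => p _.
  by rewrite (lfZ taulin) (lfZ SAlin) (lfZ qlin).
have E2 : q (\sum_(p <- cop HA a) phi (q p.1) *: p.2) = phi (q a) *: aB.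
  rewrite (lf_sum qlin) -DI -(@qcop_sum _ (fun x y => phi x *: y)).
  - by apply: eq_bigr => p _; rewrite (lfZ qlin).
  - by move=> y c u v /=; rewrite philin scalerDl scalerA.
  - by move=> x c u v /=; rewrite scalerDr !scalerA mulrC.
rewrite E1 qS /tau (lfB qlin) (lfZ qlin) /par1 (lfB qlin) qpar E2 (lfZ (par0lin HB)).
by rewrite -scalerBr scalerA mulrC -scalerA -scalerBr (lfZ SBlin).
Qed.

Lemma par1lin (C : algType K) (H : superHopf C) : islin (par1 H).
Proof. exact: islin_sub (@islin_id _ _) (par0lin H). Qed.

Lemma odd_par (b0 : B) : phi b0 != 0 -> (forall b, phi (par0 HB b) = 0) ->
  (forall b, \sum_(p <- cop HB b) phi p.1 *: p.2 = phi b *: aB) ->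
  par1 HB aB = 0.
Proof.
move=> nz Hodd DI.
pose D b := \sum_(p <- cop HB b) phi p.1 *: par1 HB p.2.
have bl : forall y, islin (fun x => phi x *: par1 HB y).
  by move=> y c u v /=; rewrite philin scalerDl scalerA.
have br : forall x, islin (fun y => phi x *: par1 HB y).
  by move=> x c u v /=; rewrite (par1lin HB) scalerDr !scalerA mulrC.
have Db : forall b, D b = phi b *: par1 HB aB.
  move=> b; rewrite -(lfZ (par1lin HB)) -DI (lf_sum (par1lin HB)).
  by apply: eq_bigr => p _; rewrite (lfZ (par1lin HB)).
have pp : forall y, par1 HB (par1 HB y) = par1 HB y.
  by move=> y; rewrite {1}/par1 (lfB (par0lin HB)) par0_idem subrr subr0.
have De : D (par0 HB b0) = D b0.
  rewrite /D (teq_bil (cop_even HB b0) bl br) big_cat !big_map /=.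
  rewrite (eq_bigr (fun _ => 0)); last by move=> p _; rewrite Hodd scale0r.
  rewrite big1_eq add0r; apply: eq_bigr => p _.
  by rewrite phiB Hodd subr0 -/(par1 HB p.2) pp.
have Dx : D ((-1) *: par0 HB b0 + b0) = 0.
  rewrite /D (teq_bil (cop_lin HB (-1) (par0 HB b0) b0) bl br) big_cat big_map /=.
  rewrite (eq_bigr (fun p => - (phi p.1 *: par1 HB p.2))); last first.
    move=> p _ /=; have := philin (-1) p.1 0; rewrite addr0 (_ : phi 0 = 0) ?addr0; last by have := phiB 0 0; rewrite !subrr.
    by move=> ->; rewrite mulN1r scaleNr.
  by rewrite sumrN -/(D _) -/(D _) De addNr.
move: Dx; rewrite Db philin Hodd mulr0 add0r => /eqP.
by rewrite scaler_eq0 (negbTE nz) /= => /eqP.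
Qed.
End Main.



Theorem mainTheorem16 (K : fieldType) (A : algType K) (B : falgType K)
  (HA : superHopf A) (HB : superHopf B) (q : A -> B)
  (phi : B -> K) (chi : A) (aB : B) :
  (2%:R : K) != 0 ->
  alg_supergroup HA ->
  hopf_quot HA HB q ->
  normal_quot HA q ->
  left_integral HB phi ->
  grouplike HA chi ->
  coacts_by HA q phi chi ->
  distinguished HB phi aB ->
  q chi = aB^-1.
Proof.
move=> h2 _ [[qlin0 q1 qM] [qpar qcop qcou qsurj]] _ [philin [b0 nz] par Hint] _ Hco
  [[gcop gcou] Hdist].
have qlin : islin q by exact: qlin0.
have LI := LIv Hint.
have DI := DIv Hdist.
have [a qa] := qsurj b0.
have nz' : phi (q a) != 0 by rewrite qa.
have key : q chi = anti HB aB.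
  have E : forall k, (forall x, 2%:R * phi (q (par1 HA x)) = k * phi (q x)) ->
      k *: par1 HB aB = 0 -> q chi = anti HB aB.
    move=> k Hk Hp.
    have := adj_comp qlin q1 qM qcop qcou philin qpar LI DI Hk a.
    rewrite -Hco (lfZ qlin) Hp subr0; exact: scalerI.
  have q1p : forall x, q (par1 HA x) = par1 HB (q x).
    by move=> x; rewrite /par1 (lfB qlin) qpar.
  case: par => [Hev|Hodd].
    apply: (E 0); last by rewrite scale0r.
    by move=> x; rewrite q1p Hev mulr0 mul0r.
  apply: (E 2%:R); last by rewrite (odd_par philin nz Hodd DI) scaler0.
  by move=> x; rewrite q1p /par1 (phiB philin) Hodd subr0.
have F : forall (F : B -> B -> B), (forall y, islin (F^~ y)) -> (forall x, islin (F x)) ->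
    \sum_(p <- cop HB aB) F p.1 p.2 = F aB aB.
  by move=> F Fl Fr; rewrite (teq_bil gcop Fl Fr) big_seq1.
have l1 : anti HB aB * aB = 1.
  rewrite -(F (fun x y => anti HB x * y)).
  - by rewrite anti_l gcou scale1r.
  - by move=> y c u v /=; rewrite (anti_lin HB) mulrDl -scalerAl.
  - by move=> x c u v /=; rewrite mulrDr -scalerAr.
have r1 : aB * anti HB aB = 1.
  rewrite -(F (fun x y => x * anti HB y)).
  - by rewrite anti_r gcou scale1r.
  - by move=> y c u v /=; rewrite mulrDl -scalerAl.
  - by move=> x c u v /=; rewrite (anti_lin HB) mulrDr -scalerAr.
have U : aB \is a GRing.unit by apply/unitrP; exists (anti HB aB).
by rewrite key -[LHS]mulr1 -(mulrV U) mulrA l1 mul1r.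
Qed.
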